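(* Let $k\ge 1$ and $1\le k^*\le k$ be integers, and run the Reduce-By-Median-Counter algorithm (defined in the context) with parameters $k,k^*$ on a weighted stream $(i_1,\Delta_1),(i_2,\Delta_2),\dots$. For each $n\ge 0$ let $f_{i,n}=\sum_{t\le n: i_t=i}\Delta_t$, let $\hat f_{i,n}$ be the output of Estimate$(i)$ after the first $n$ updates are processed, let $E_n=\max_{i\in[m]}(f_{i,n}-\hat f_{i,n})$, let $N_n=\sum_{t=1}^n\Delta_t$, and let $C_n=\sum_{j\in T}c(j)$ be the sum of the counters after the first $n$ updates. Then for every $n\ge 0$, $$E_n\le \frac{N_n-C_n}{k^*}.$$
   Context: A weighted stream over the universe $[m]=\{1,\dots,m\}$ is a sequence of updates $(i_t,\Delta_t)$ with $i_t\in[m]$ and real weights $\Delta_t>0$. The Reduce-By-Median-Counter algorithm with integer parameters $k\ge 1$ and $1\le k^*\le k$ maintains a set $T\subseteq[m]$ of at most $k$ items, each $j\in T$ carrying a nonnegative real counter $c(j)$; initially $T=\emptyset$. Update$(i,\Delta)$: if $i\in T$, set $c(i)\gets c(i)+\Delta$; else if $|T|<k$, add $i$ to $T$ with $c(i)=\Delta$; else call DecrementCounters(), and afterwards, if $\Delta\ge c_{k^*}$, add $i$ to $T$ with $c(i)=\Delta-c_{k^*}$. DecrementCounters(): let $c_{k^*}$ be the $k^*$-th largest value, counting multiplicity, of the multiset $\{c(j): j\in T\}$; for every $j\in T$ set $c(j)\gets c(j)-c_{k^*}$, and remove $j$ from $T$ if now $c(j)\le 0$. Estimate$(i)$ returns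 $c(i)$ if $i\in T$ and $0$ otherwise. *)

(* Defs.v *)
From mathcomp Require Import all_boot all_order all_algebra.
Set Implicit Arguments. Unset Strict Implicit. Unset Printing Implicit Defensive.
Import Order.TTheory GRing.Theory Num.Theory.
Local Open Scope ring_scope.

Section RBMC.
Variables (R : realFieldType) (m k kstar : nat).

(* State: the set T of tracked items and counters c (c j meaningful for j \in T). *)
Definition rbmc_state := ({set 'I_m} * {ffun 'I_m -> R})%type.

Definition rbmc_init : rbmc_state := (set0, [ffun => 0]).

Definition kth_largest (S : rbmc_state) : R :=
  nth 0 (sort (fun x y : R => y <= x) [seq S.2 j | j <- enum S.1]) kstar.-1.

Definition decrement_counters (S : rbmc_state) : rbmc_state * R :=
  let ck := kth_largest S in
  let c' := [ffun j => S.2 j - ck] in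
  (([set j in S.1 | 0 < c' j], c'), ck).

Definition rbmc_update (S : rbmc_state) (i : 'I_m) (d : R) : rbmc_state :=
  let: (T, c) := S in
  if i \in T then (T, [ffun j => if j == i then c j + d else c j])
  else if (#|T| < k)%N then (i |: T, [ffun j => if j == i then d else c j])
  else
    let: ((T', c'), ck) := decrement_counters S in
    if ck <= d then (i |: T', [ffun j => if j == i then d - ck else c' j])
    else (T', c').

Definition rbmc_estimate (S : rbmc_state) (i : 'I_m) : R :=
  if i \in S.1 then S.2 i else 0.

Definition rbmc_run (ii : nat -> 'I_m) (dd : nat -> R) (n : nat) : rbmc_state :=
  foldl (fun S t => rbmc_update S (ii t) (dd t)) rbmc_init (iota 1 n).

Definition freq (ii : nat -> 'I_m) (dd : nat -> R) (n : nat) (i : 'I_m) : R :=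
  \sum_(1 <= t < n.+1 | ii t == i) dd t.

Definition total_weight (dd : nat -> R) (n : nat) : R :=
  \sum_(1 <= t < n.+1) dd t.

Definition counter_sum (S : rbmc_state) : R := \sum_(j in S.1) S.2 j.

End RBMC.

(* Main.v *)
Require Import Defs.
From mathcomp Require Import all_boot all_order all_algebra.
From mathcomp Require Import ring lra zify.
Set Implicit Arguments. Unset Strict Implicit. Unset Printing Implicit Defensive.
Import Order.TTheory GRing.Theory Num.Theory.
Local Open Scope ring_scope.

Lemma sum_const_ge (R : realFieldType) (x : R) (t : seq R) :
  (forall y, y \in t -> x <= y) ->
  \sum_(y <- t) (if y < x then y else x) = (size t)%:R * x.
Proof.
elim: t => [|a t IH] h; first by rewrite big_nil mul0r.
rewrite big_cons IH; last by move=> y yt; apply: h; rewrite inE yt orbT.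
have ha : x <= a by apply: h; rewrite inE eqxx.
rewrite ltNge ha /= -addn1 natrD; lra.
Qed.

Lemma sum_min (R : realFieldType) (kstar : nat) (s : seq R) :
  (1 <= kstar)%N -> (kstar <= size s)%N -> all (fun y => 0 <= y) s ->
  let x := nth 0 (sort (fun x y : R => y <= x) s) kstar.-1 in
  0 <= x /\ kstar%:R * x <= \sum_(y <- s) (if y < x then y else x).
Proof.
move=> h1 h2 hall x.
set le := (fun x y : R => y <= x).
have tot : total le by move=> a b; rewrite /le; exact: le_total.
have tr : transitive le by move=> a b c; rewrite /le => h1' h2'; exact: le_trans h2' h1'.
have rf : reflexive le by move=> a; rewrite /le.
have ss : sorted le (sort le s) := sort_sorted tot s.
have sz : size (sort le s) = size s := size_sort le s.
have hall' : all (fun y => 0 <= y) (sort le s) by rewrite all_sort.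
have x0 : 0 <= x.
  apply: (allP hall'); apply: mem_nth; rewrite sz; lia.
split => //.
rewrite -(perm_big _ (permEl (perm_sort le s))).
rewrite -(cat_take_drop kstar (sort le s)) big_cat /=.
have hd : 0 <= \sum_(y <- drop kstar (sort le s)) (if y < x then y else x).
  rewrite big_seq; apply: sumr_ge0 => y /mem_drop ys.
  case: ifP => // _; exact: (allP hall').
rewrite sum_const_ge ?size_take ?sz.
  have -> : (if (kstar < size s)%N then kstar else size s) = kstar by case: (ltnP kstar (size s)) => hh //; apply/eqP; rewrite eqn_leq hh h2.
  lra.
move=> y /(nthP 0) [i]; rewrite size_take sz => hi <-.
have hik : (i < kstar)%N by move: hi; case: (ltnP kstar (size s)) => hh hi; lia.
rewrite nth_take //.
apply: (sorted_leq_nth tr rf 0 ss); rewrite ?inE ?sz /=; lia.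
Qed.

Lemma step (R : realFieldType) (m k kstar : nat) (T : {set 'I_m}) (c : {ffun 'I_m -> R}) (i : 'I_m) (d D N : R) (f : 'I_m -> R) :
  (1 <= kstar)%N -> (kstar <= k)%N -> 0 < d ->
  (forall j, j \in T -> 0 <= c j) ->
  (forall j, f j - rbmc_estimate (T,c) j <= D) ->
  kstar%:R * D <= N - counter_sum (T,c) ->
  let S' := rbmc_update k kstar (T,c) i d in
  (forall j, j \in S'.1 -> 0 <= S'.2 j) /\ exists D',
   (forall j, f j + (if i == j then d else 0) - rbmc_estimate S' j <= D') /\
   kstar%:R * D' <= N + d - counter_sum S'.
Proof.
move=> hks1 hks2 hd hc hf hN S'; rewrite /S' /rbmc_update.
case: ifP => iT.
  split.
    move=> j /= jT; rewrite ffunE; case: eqP => _; [have := hc _ jT; lra | exact: hc].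
  exists D; split.
    move=> j; have := hf j; rewrite /rbmc_estimate /= ffunE eq_sym.
    case: (eqVneq j i) => [->|ne]; first by rewrite iT; lra.
    by case: (j \in T); lra.
  move: hN; rewrite /counter_sum /= (bigD1 i) //= [X in _ -> _ <= _ - X](bigD1 i) //= ffunE eqxx.
  have -> : \sum_(i0 in T | i0 != i) [ffun j => if j == i then c j + d else c j] i0 = \sum_(i0 in T | i0 != i) c i0 by apply: eq_bigr => j /andP[_ ne]; rewrite ffunE (negbTE ne).
  lra.
case: ifP => hk'.
  have iT' : i \notin T by rewrite iT.
  split.
    move=> j /=; rewrite in_setU1 ffunE; case: eqP => _ /=; [lra | exact: hc].
  exists D; split.
    move=> j; have := hf j; rewrite /rbmc_estimate /= ffunE in_setU1 eq_sym.
    case: (eqVneq j i) => [->|ne] /=; first by rewrite iT; lra.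
    by case: (j \in T); lra.
  move: hN; rewrite /counter_sum /= big_setU1 //= ffunE eqxx.
  have -> : \sum_(i0 in T) [ffun j => if j == i then d else c j] i0 = \sum_(i0 in T) c i0.
    apply: eq_bigr => j jT; rewrite ffunE ifN //.
    by apply/eqP => ji; move: jT; rewrite ji iT.
  lra.
rewrite /decrement_counters /=.
set x := kth_largest _ _.
have [x0 key] : 0 <= x /\ kstar%:R * x <= \sum_(j in T) (if c j < x then c j else x).
  have := @sum_min R kstar [seq c j | j <- enum T] hks1.
  rewrite size_map -cardE /= -/x.
  have -> : \sum_(y <- [seq c j | j <- enum T]) (if y < x then y else x) = \sum_(j in T) (if c j < x then c j else x) by rewrite big_map big_enum.
  apply.
    by rewrite leqNgt; apply/negP => h; rewrite (leq_trans h hks2) in hk'.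
  by apply/allP => y /mapP [j]; rewrite mem_enum => jT ->; exact: hc.
set T' := [set j0 in T | _].
have memT' : forall j, (j \in T') = (j \in T) && (0 < c j - x).
  by move=> j; rewrite inE ffunE.
have iT' : i \notin T' by rewrite memT' iT.
have hsub : \sum_(j in T') (c j - x) <= \sum_(j in T) (c j - (if c j < x then c j else x)).
  rewrite big_mkcond [X in _ <= X]big_mkcond /=; apply: ler_sum => j _.
  rewrite memT'; case: (j \in T) => //=.
  case: ifPn => h1; case: ifPn => h2; rewrite -?leNgt in h1 h2; lra.
have hC : \sum_(j in T) (c j - (if c j < x then c j else x)) = counter_sum (T, c) - \sum_(j in T) (if c j < x then c j else x) by rewrite sumrB.
have hfj : forall j, f j <= D + (if j \in T then c j else 0).
  by move=> j; have := hf j; rewrite /rbmc_estimate /=; lra.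
case: ifPn => hxd.
  split.
    move=> j /=; rewrite in_setU1 !ffunE; case: eqP => _ /=; first lra.
    by rewrite memT' => /andP[_ h]; lra.
  exists (D + x); split.
    move=> j; rewrite /rbmc_estimate /= in_setU1 !ffunE.
    case: (eqVneq j i) => [->|ne] /=.
      have := hfj i; rewrite iT; lra.
    rewrite memT'; have := hfj j.
    case: (j \in T) => /=; last lra.
    case: ifPn => h; rewrite -?leNgt in h; lra.
  have -> : counter_sum (i |: T', [ffun j => if j == i then d - x else [ffun j0 => c j0 - x] j]) = (d - x) + \sum_(j in T') (c j - x).
    rewrite /counter_sum /= big_setU1 //= ffunE eqxx; congr (_ + _).
    apply: eq_bigr => j jT; rewrite !ffunE ifN //.
    by apply/eqP => ji; move: jT; rewrite ji (negbTE iT').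
  move: hN; rewrite /counter_sum /= mulrDr => hN; rewrite /counter_sum /= in hC; lra.
rewrite -ltNge in hxd.
split.
  move=> j /=; rewrite ffunE memT' => /andP[_ h]; lra.
exists (D + x); split.
  move=> j; rewrite /rbmc_estimate /= !ffunE.
  case: (eqVneq j i) => [->|ne] /=.
    rewrite (negbTE iT'); have := hfj i; rewrite iT; lra.
  rewrite memT'; have := hfj j.
  case: (j \in T) => /=; last lra.
  case: ifPn => h; rewrite -?leNgt in h; lra.
have -> : counter_sum (T', [ffun j0 => c j0 - x]) = \sum_(j in T') (c j - x).
  by rewrite /counter_sum /=; apply: eq_bigr => j _; rewrite ffunE.
move: hN; rewrite /counter_sum /= mulrDr => hN; rewrite /counter_sum /= in hC; lra.
Qed.

Lemma run_succ (R : realFieldType) (m k kstar : nat) (ii : nat -> 'I_m) (dd : nat -> R) n :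
  rbmc_run k kstar ii dd n.+1 = rbmc_update k kstar (rbmc_run k kstar ii dd n) (ii n.+1) (dd n.+1).
Proof. rewrite /rbmc_run; have -> : iota 1 n.+1 = iota 1 n ++ [:: n.+1].
  by rewrite -(addn1 n) iotaD add1n addn1.
by rewrite foldl_cat. Qed.

Theorem lemma6 (R : realFieldType) (m k kstar : nat)
  (ii : nat -> 'I_m) (dd : nat -> R)
  (hk : (1 <= k)%N) (hks1 : (1 <= kstar)%N) (hks2 : (kstar <= k)%N)
  (hpos : forall t, (1 <= t)%N -> 0 < dd t) (n : nat) :
  forall i : 'I_m,
    freq ii dd n i - rbmc_estimate (rbmc_run k kstar ii dd n) i
      <= (total_weight dd n - counter_sum (rbmc_run k kstar ii dd n)) / kstar%:R.
Proof.
have inv : (forall j, j \in (rbmc_run k kstar ii dd n).1 -> 0 <= (rbmc_run k kstar ii dd n).2 j) /\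
  exists D, (forall j, freq ii dd n j - rbmc_estimate (rbmc_run k kstar ii dd n) j <= D) /\
   kstar%:R * D <= total_weight dd n - counter_sum (rbmc_run k kstar ii dd n).
  elim: n => [|n [IHc [D [IHf IHN]]]].
    split; first by move=> j; rewrite /= inE.
    exists 0; split.
      by move=> j; rewrite /freq /rbmc_estimate /= inE big_geq // subr0.
    by rewrite /total_weight /counter_sum /= big_geq // big_set0 mulr0 subr0.
  rewrite run_succ.
  have hf : forall j, freq ii dd n.+1 j = freq ii dd n j + (if ii n.+1 == j then dd n.+1 else 0).
    by move=> j; rewrite /freq big_mkcond big_nat_recr //= -big_mkcond.
  have hN : total_weight dd n.+1 = total_weight dd n + dd n.+1.
    by rewrite /total_weight big_nat_recr.
  move: IHc IHf IHN; case: (rbmc_run k kstar ii dd n) => T c IHc IHf IHN.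
  have := @step R m k kstar T c (ii n.+1) (dd n.+1) D (total_weight dd n) (freq ii dd n) hks1 hks2 (hpos n.+1 isT) IHc IHf IHN.
  move=> /= [h1 [D' [h2 h3]]]; split => //; exists D'; split.
    by move=> j; rewrite hf.
  by rewrite hN.
case: inv => _ [D [hf hN]] i.
have kp : 0 < kstar%:R :> R by rewrite ltr0n.
apply: (le_trans (hf i)); rewrite ler_pdivlMr // mulrC //.
Qed.
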